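(* Let $k\ge 3$ be an integer and $n=2k-1$. For every positive integer $s$, $$\alpha\big(I_{B_{2k-1}}^{(s(2k-3))}\big)=s(2k-1).$$
   Context: Let $\mathbb{K}$ be a field (the paper also calls it $k$). $Q_n$ is the cycle graph on vertices $1,\dots,n$ (edges $\{i,i+1\}$ for $1\le i\le n-1$ and $\{n,1\}$). $B_n$ is the simplicial complex on $\{0,\dots,n+1\}$ whose facets are $\{0,i,j\}$ and $\{n+1,i,j\}$ for each edge $\{i,j\}$ of $Q_n$ (boundary of the bipyramid over the $n$-gon), and $I_{B_n}\subset R=\mathbb{K}[x_0,\dots,x_{n+1}]$ is its Stanley-Reisner ideal, generated by $\prod_{i\in\tau}x_i$ over non-faces $\tau$. For a homogeneous ideal $I$, $I^{(m)}=R\cap\bigcap_{P\in\mathrm{Ass}(I)}I^mR_P$ and $\alpha(I)=\min\{t: I_t\ne 0\}$. *)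

(* Defs.v *)
From HB Require Import structures.
From mathcomp Require Import all_boot all_algebra.
From mathcomp Require Import mpoly.

Set Implicit Arguments.
Unset Strict Implicit.
Unset Printing Implicit Defensive.
Import GRing.Theory.
Local Open Scope ring_scope.

Definition ideal_gen (R : comNzRingType) (S : R -> Prop) : R -> Prop :=
  fun f => exists l : seq (R * R),
    (forall p, p \in l -> S p.2) /\ f = \sum_(p <- l) p.1 * p.2.

Definition ideal_pow (R : comNzRingType) (I : R -> Prop) (m : nat) : R -> Prop :=
  ideal_gen (fun f => exists s : seq R,
    size s = m /\ (forall x, x \in s -> I x) /\ f = \prod_(x <- s) x).

Definition is_ideal (R : comNzRingType) (P : R -> Prop) : Prop :=
  [/\ P 0, (forall a b, P a -> P b -> P (a + b)) & (forall r a, P a -> P (r * a))].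

Definition is_prime_ideal (R : comNzRingType) (P : R -> Prop) : Prop :=
  [/\ is_ideal P, ~ P 1 & (forall a b, P (a * b) -> P a \/ P b)].

Definition Ass (R : comNzRingType) (I : R -> Prop) (P : R -> Prop) : Prop :=
  is_prime_ideal P /\ exists f : R, forall g, P g <-> I (g * f).

(* Symbolic power I^(m) = R ∩ ⋂_{P ∈ Ass(I)} I^m R_P ;
   f ∈ I^m R_P ∩ R  iff  g f ∈ I^m for some g ∉ P. *)
Definition symbolic_power (R : comNzRingType) (I : R -> Prop) (m : nat) : R -> Prop :=
  fun f => forall P, Ass I P -> exists g, ~ P g /\ ideal_pow I m (g * f).

Definition is_homog (N : nat) (K : comNzRingType) (d : nat) (p : {mpoly K[N]}) : bool :=
  all (fun m => mdeg m == d) (msupp p).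

Definition alpha_eq (N : nat) (K : comNzRingType) (J : {mpoly K[N]} -> Prop) (a : nat) : Prop :=
  (exists f, [/\ J f, f != 0 & is_homog a f]) /\
  (forall t f, J f -> f != 0 -> is_homog t f -> (a <= t)%N).

Definition cyc_adj (n i j : nat) : bool :=
  [&& (1 <= i <= n)%N, (1 <= j <= n)%N &
      [|| j == i.+1, i == j.+1, (i == 1%N) && (j == n) | (i == n) && (j == 1%N)]].

(* Faces of B_n on vertex set {0,...,n+1} = 'I_(n.+2): subsets of some facet
   {0,i,j} or {n+1,i,j} with {i,j} an edge of Q_n. *)
Definition B_face (n : nat) (tau : {set 'I_(n.+2)}) : bool :=
  [exists i : 'I_(n.+2), exists j : 'I_(n.+2),
     cyc_adj n i j &&
     ((tau \subset [set ord0; i; j]) || (tau \subset [set ord_max; i; j]))].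

Definition SR_ideal_B (K : fieldType) (n : nat) : {mpoly K[n.+2]} -> Prop :=
  ideal_gen (fun f => exists tau : {set 'I_(n.+2)},
    ~~ B_face tau /\ f = \prod_(i in tau) 'X_i).
Arguments SR_ideal_B K n : clear implicits.

(* Main.v *)
Require Import Defs.
From mathcomp Require Import all_boot all_algebra.
From mathcomp Require Import mpoly.
From mathcomp Require Import zify.
Set Implicit Arguments.
Unset Strict Implicit.
Unset Printing Implicit Defensive.
Import GRing.Theory.
Local Open Scope ring_scope.
From mathcomp Require Import ring.
Section IG.
Variable (R : comNzRingType) (S : R -> Prop).

Lemma ig0 : ideal_gen S 0.
Proof. by exists [::]; rewrite big_nil. Qed.

Lemma igD a b : ideal_gen S a -> ideal_gen S b -> ideal_gen S (a + b).
Proof.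
move=> [l1 [H1 ->]] [l2 [H2 ->]]; exists (l1 ++ l2); split; last by rewrite big_cat.
by move=> p; rewrite mem_cat => /orP [] ?; [apply: H1|apply: H2].
Qed.

Lemma igM r a : ideal_gen S a -> ideal_gen S (r * a).
Proof.
move=> [l [H ->]]; exists [seq (r * p.1, p.2) | p <- l]; split.
  by move=> p /mapP [q Hq ->] /=; apply: H.
by rewrite big_map mulr_sumr; apply: eq_bigr => p _; rewrite mulrA.
Qed.

Lemma igS a : S a -> ideal_gen S a.
Proof. by move=> Ha; exists [:: (1, a)]; split; [move=> p; rewrite inE => /eqP -> | rewrite big_seq1 mul1r]. Qed.

Lemma igSum (I : eqType) (r : seq I) (F : I -> R) :
  (forall i, i \in r -> ideal_gen S (F i)) -> ideal_gen S (\sum_(i <- r) F i).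
Proof.
elim: r => [|x r IH] H; first by rewrite big_nil; apply: ig0.
rewrite big_cons; apply: igD; first by apply: H; rewrite inE eqxx.
by apply: IH => i Hi; apply: H; rewrite inE Hi orbT.
Qed.

Lemma ig_ind (P : R -> Prop) : P 0 -> (forall a b, P a -> P b -> P (a + b)) ->
  (forall r a, S a -> P (r * a)) -> forall a, ideal_gen S a -> P a.
Proof.
move=> P0 PD PM a [l [H ->]]; elim: l H => [|x l IH] H; first by rewrite big_nil.
rewrite big_cons; apply: PD; first by apply: PM; apply: H; rewrite inE eqxx.
by apply: IH => p Hp; apply: H; rewrite inE Hp orbT.
Qed.
End IG.
Lemma cyc_adjP n i j : reflect ([/\ (1 <= i <= n)%N, (1 <= j <= n)%N &
   (j = i.+1 \/ i = j.+1 \/ (i = 1 /\ j = n) \/ (i = n /\ j = 1))%N]) (cyc_adj n i j).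
Proof.
rewrite /cyc_adj; apply: (iffP and3P) => [[H1 H2 /or4P H3]|[H1 H2 H3]]; split => //.
  case: H3 => [/eqP|/eqP|/andP [/eqP ? /eqP ?]|/andP [/eqP ? /eqP ?]]; tauto.
by case: H3 => [->|[->|[[-> ->]|[-> ->]]]]; rewrite !eqxx ?orbT.
Qed.

Lemma cyc_sym n i j : cyc_adj n i j = cyc_adj n j i.
Proof. by apply/cyc_adjP/cyc_adjP => [] [H1 H2 H3]; split => //; lia. Qed.

Lemma no_tri n u v w : (4 <= n)%N -> cyc_adj n u v -> cyc_adj n v w -> cyc_adj n u w -> False.
Proof. by move=> Hn /cyc_adjP [? ? ?] /cyc_adjP [? ? ?] /cyc_adjP [? ? ?]; lia. Qed.

Lemma cyc_neq n u v : (2 <= n)%N -> cyc_adj n u v -> [/\ u <> v, (0 < u <= n)%N & (0 < v <= n)%N].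
Proof. by move=> ? /cyc_adjP [? ? ?]; split; lia. Qed.
Section Faces.
Variable n : nat.
Hypothesis hn : (4 <= n)%N.
Notation T := 'I_(n.+2).

Lemma face_sub (s t : {set T}) : B_face t -> s \subset t -> B_face s.
Proof.
move=> /existsP [i /existsP [j /andP [Ha Hs]]] st; apply/existsP; exists i; apply/existsP; exists j.
by rewrite Ha /=; case/orP: Hs => H; rewrite (subset_trans st H) ?orbT.
Qed.

Definition isfacet (S : {set T}) (c a b : T) :=
  [/\ (c == ord0) || (c == ord_max), cyc_adj n a b & S = [set c; a; b]].

Lemma facet_face S c a b : isfacet S c a b -> B_face S.
Proof.
case=> Hc Hab ->; apply/existsP; exists a; apply/existsP; exists b; rewrite Hab /=.
by case/orP: Hc => /eqP ->; rewrite subxx ?orbT.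
Qed.

Lemma facet_max S c a b v : isfacet S c a b -> v \notin S -> ~~ B_face (v |: S).
Proof.
case=> Hc Hab -> Hv; apply/negP => /existsP [i /existsP [j /andP [Hij Hs]]].
have [? ? ?] := cyc_neq (leq_trans (isT : (2 <= 4)%N) hn) Hab.
have [? ? ?] := cyc_neq (leq_trans (isT : (2 <= 4)%N) hn) Hij.
move: Hv; rewrite !inE -!val_eqE /=.
have Hm x : x \in [set c; a; b] -> x \in v |: [set c; a; b] by move=> Hx; rewrite inE Hx orbT.
move: Hc; rewrite -!val_eqE /= => Hc.
case/orP: Hs => /subsetP Hs;
  have := Hs v (setU11 _ _); have := Hs c (Hm c ltac:(by rewrite !inE eqxx));
  have := Hs a (Hm a ltac:(by rewrite !inE eqxx ?orbT)); have := Hs b (Hm b ltac:(by rewrite !inE eqxx ?orbT));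
  rewrite !inE -!val_eqE /=; lia.
Qed.

Lemma nonface2 (a b : T) : (0 < a <= n)%N -> (0 < b <= n)%N -> a != b -> ~~ cyc_adj n a b ->
  ~~ B_face [set a; b].
Proof.
move=> Ha Hb; rewrite -val_eqE => /= Hne Hadj; apply/negP => /existsP [i /existsP [j /andP [Hij Hs]]].
have [? ? ?] := cyc_neq (leq_trans (isT : (2 <= 4)%N) hn) Hij.
have H : ((nat_of_ord a == i) && (nat_of_ord b == j)) || ((nat_of_ord a == j) && (nat_of_ord b == i)).
  case/orP: Hs => /subsetP Hs;
  have := Hs a ltac:(by rewrite !inE eqxx); have := Hs b ltac:(by rewrite !inE eqxx ?orbT);
  rewrite !inE -!val_eqE /=; lia.
case/orP: H => /andP [/eqP H1 /eqP H2]; move: Hadj; rewrite H1 H2 ?Hij //.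
by rewrite cyc_sym Hij.
Qed.

Lemma face_facet (s : {set T}) : B_face s -> exists S c a b, isfacet S c a b /\ s \subset S.
Proof.
move=> /existsP [i /existsP [j /andP [Hij /orP [H|H]]]].
  by exists [set ord0; i; j], ord0, i, j; split => //; split => //; rewrite eqxx.
by exists [set ord_max; i; j], ord_max, i, j; split => //; split => //; rewrite eqxx orbT.
Qed.
End Faces.
Section Psi.
Variable (K : fieldType) (n : nat).
Notation T := 'I_(n.+2).
Notation R := {mpoly K[n.+2]}.
Definition hS (S : {set T}) (v : T) : {poly R} := if v \in S then ('X_v)%:P else ('X_v)%:P * 'X.
Definition cK : K -> {poly R} := (@polyC R) \o (@mpolyC n.+2 K).
Definition psi S (p : R) : {poly R} := mmap cK (hS S) p.
Lemma psiM S p q : psi S (p * q) = psi S p * psi S q.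
Proof. by rewrite /psi rmorphM. Qed.
Lemma psiD S p q : psi S (p + q) = psi S p + psi S q.
Proof. by rewrite /psi rmorphD. Qed.

Definition degS (S : {set T}) (w : 'X_{1..n.+2}) := (\sum_(v < n.+2 | v \notin S) w v)%N.

Lemma psiX S w : psi S 'X_[w] = ('X_[w])%:P * 'X^(degS S w).
Proof.
rewrite /psi mmapX /mmap1.
rewrite (eq_bigr (fun i => ('X_i ^+ w i)%:P * 'X^(if i \notin S then w i else 0%N))); last first.
  move=> i _; rewrite /hS; case: (i \in S) => /=; first by rewrite expr0 mulr1 rmorphXn.
  by rewrite exprMn rmorphXn.
rewrite big_split /= -rmorph_prod -mpolyXE_id prodrXr /degS /=.
by rewrite [in RHS]big_mkcond.
Qed.

Lemma psiE S p : psi S p = \sum_(w <- msupp p) (p@_w *: 'X_[w])%:P * 'X^(degS S w).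
Proof.
rewrite /psi /mmap; apply: eq_bigr => w _.
by rewrite -(@mmapX _ _ _ (hS S) cK w) -/(psi S _) psiX /cK /= mulrA -rmorphM mul_mpolyC.
Qed.

Lemma coef_psi S p j w0 :
  ((psi S p)`_j)@_w0 = if degS S w0 == j then p@_w0 else 0.
Proof.
rewrite psiE coef_sum.
rewrite (eq_bigr (fun w => if degS S w == j then p@_w *: 'X_[w] else 0)); last first.
  by move=> w _; rewrite coefCM coefXn eq_sym; case: (_ == _); rewrite ?mulr1 ?mulr0.
rewrite raddf_sum /=.
rewrite (eq_bigr (fun w => if w == w0 then (if degS S w0 == j then p@_w0 else 0) else 0)); last first.
  move=> w _ /=; case: (eqVneq w w0) => [->|Hne].
    by case: ifP => _; rewrite ?mcoeff0 // mcoeffZ mcoeffX eqxx mulr1.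
  by case: ifP => _; rewrite ?mcoeff0 // mcoeffZ mcoeffX (negbTE Hne) mulr0.
have [Hin|Hnin] := boolP (w0 \in msupp p).
  rewrite (bigD1_seq w0) //= ?msupp_uniq // ?eqxx big1 ?addr0 // => w /negbTE -> //.
rewrite big1_seq; last by move=> w /andP [_ Hw]; case: eqP => // Hw0; move: Hnin; rewrite -Hw0 Hw.
by rewrite memN_msupp_eq0 //; case: ifP.
Qed.
End Psi.

Lemma mpolyX_neq0 (K : fieldType) N (m : 'X_{1..N}) : ('X_[m] : {mpoly K[N]}) != 0.
Proof.
apply/eqP => H; have := mcoeffX K m m; rewrite H mcoeff0 eqxx => /eqP.
by rewrite eq_sym oner_eq0.
Qed.

Lemma cancelX (R : idomainType) (p q r : {poly R}) m :
  q`_0 != 0 -> p * q = 'X^m * r -> exists r', p = 'X^m * r'.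
Proof.
move=> Hq; elim: m p r => [|m IH] p r H; first by exists p; rewrite expr0 mul1r.
have Hp0 : p`_0 = 0.
  have := congr1 (fun x : {poly _} => x`_0) H; rewrite /= coef0M coefXnM /=.
  by move/eqP; rewrite mulf_eq0 (negbTE Hq) orbF => /eqP.
have /factor_theorem [p1 Hp1] : root p 0 by rewrite /root horner_coef0 Hp0.
rewrite polyC0 subr0 in Hp1; subst p.
have H' : p1 * q = 'X^m * r.
  apply: (@mulfI _ 'X); first by rewrite polyX_eq0.
  by rewrite mulrA (mulrC 'X p1) H mulrA -exprS.
have [r' Hr'] := IH _ _ H'; exists r'; rewrite Hr' exprS; ring.
Qed.

Section Ideal.
Variable (K : fieldType) (n : nat).
Hypothesis hn : (4 <= n)%N.
Notation T := 'I_(n.+2).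
Notation R := {mpoly K[n.+2]}.
Notation I := (SR_ideal_B K n).

Lemma psiXU S v : psi S ('X_v : R) = hS K S v.
Proof. by rewrite /psi mmapX mmap1U. Qed.

Lemma psi0 S : psi S (0 : R) = 0.
Proof. by rewrite /psi raddf0. Qed.

Lemma psi1 S : psi S (1 : R) = 1.
Proof. by rewrite /psi rmorph1. Qed.

Lemma psi_prod S (r : seq R) : psi S (\prod_(x <- r) x) = \prod_(x <- r) psi S x.
Proof. by rewrite /psi rmorph_prod. Qed.

Lemma I_psi S c a b x : isfacet S c a b -> I x -> exists r, psi S x = 'X * r.
Proof.
move=> HS; apply: (ig_ind (P := fun x => exists r, psi S x = 'X * r)).
- by exists 0; rewrite psi0 mulr0.
- by move=> p q [r1 H1] [r2 H2]; exists (r1 + r2); rewrite psiD H1 H2 mulrDr.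
move=> r y [tau [Htau ->]].
have [v /andP [Hvt HvS]] : exists v, (v \in tau) && (v \notin S).
  case: (pickP (fun v => (v \in tau) && (v \notin S))) => [v Hv|H]; first by exists v.
  move: Htau; rewrite (face_sub (facet_face HS)) //; apply/subsetP => v Hv.
  by have := H v; rewrite Hv /= => /negbFE.
rewrite psiM {2}/psi rmorph_prod (bigD1 v) //= mmapX mmap1U /hS (negbTE HvS).
exists (psi S r * ((('X_v)%:P) * \prod_(i in tau | i != v) psi S 'X_i)); ring.
Qed.

Lemma Ipow_psi S c a b m x : isfacet S c a b -> ideal_pow I m x -> exists r, psi S x = 'X^m * r.
Proof.
move=> HS; apply: (ig_ind (P := fun x => exists r, psi S x = 'X^m * r)).
- by exists 0; rewrite psi0 mulr0.
- by move=> p q [r1 H1] [r2 H2]; exists (r1 + r2); rewrite psiD H1 H2 mulrDr.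
move=> r y [s [<- [Hs ->]]].
rewrite psiM; suff [r1 ->] : exists r1, psi S (\prod_(x <- s) x) = 'X^(size s) * r1.
  by exists (psi S r * r1); ring.
elim: s Hs => [|z s IH] Hs; first by exists 1; rewrite big_nil psi1 mulr1.
have [r1 H1] := IH (fun w Hw => Hs w (@mem_behead _ (z :: s) w Hw)).
have [r2 H2] := I_psi HS (Hs z (mem_head _ _)).
exists (r2 * r1); rewrite big_cons psiM H1 H2 /= exprS; ring.
Qed.

Definition xS (S : {set T}) : R := \prod_(v in S) 'X_v.

Lemma xS_neq0 S : xS S != 0.
Proof. by apply/prodf_neq0 => v _; apply: mpolyX_neq0. Qed.

Lemma psi_xS S : psi S (xS S) = (xS S)%:P.
Proof.
rewrite /xS /psi rmorph_prod [RHS]rmorph_prod; apply: eq_bigr => v Hv.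
by apply: (etrans (psiXU S v)); rewrite /hS Hv.
Qed.

Lemma L2gen p q : (forall w, w \in msupp p -> I ('X_[w] * q)) -> I (p * q).
Proof.
move=> H; rewrite {1}(mpolyE p) mulr_suml; apply: igSum => w Hw.
by rewrite -mul_mpolyC -mulrA; apply: igM; apply: H.
Qed.

Lemma Pf_psi S c a b g : isfacet S c a b -> (I (g * xS S) <-> (psi S g)`_0 = 0).
Proof.
move=> HS; split.
  move=> /(I_psi HS) [r]; rewrite psiM psi_xS => H.
  have := congr1 (fun x : {poly _} => x`_0) H; rewrite /= coefMC coef0M coefX mul0r.
  by move/eqP; rewrite mulf_eq0 (negbTE (xS_neq0 S)) orbF => /eqP.
move=> H0; apply: L2gen => w Hw.
have Hd : degS S w != 0%N.
  apply/negP => /eqP Hd; have := coef_psi S g 0 w; rewrite H0 mcoeff0 Hd eqxx => /esym /eqP.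
  by rewrite mcoeff_eq0 Hw.
have [v /andP [HvS Hwv]] : exists v, (v \notin S) && (w v != 0%N).
  case: (pickP (fun v => (v \notin S) && (w v != 0%N))) => [v Hv|H]; first by exists v.
  move: Hd; rewrite /degS big1 // => v Hv; have := H v; rewrite Hv /= => /negbFE /eqP //.
have HU : (U_(v) <= w)%MM by rewrite lep1mP.
rewrite -(submK HU) mpolyXD -mulrA.
have -> : 'X_[U_(v)] * xS S = \prod_(i in v |: S) 'X_i by rewrite /xS big_setU1.
apply: igM; apply: igS; exists (v |: S); split => //.
exact: (facet_max hn HS).
Qed.

Definition Pf (S : {set T}) (g : R) := I (g * xS S).

Lemma Pf_prime S c a b : isfacet S c a b -> is_prime_ideal (Pf S).
Proof.
move=> HS; split; first split.
- by rewrite /Pf mul0r; apply: ig0.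
- by move=> x y Hx Hy; rewrite /Pf mulrDl; apply: igD.
- by move=> r x Hx; rewrite /Pf -mulrA; apply: igM.
- by rewrite /Pf (Pf_psi _ HS) psi1 coefC eqxx; apply/eqP; rewrite oner_eq0.
move=> x y; rewrite /Pf !(Pf_psi _ HS) psiM coef0M => /eqP; rewrite mulf_eq0.
by case/orP => /eqP H; [left|right].
Qed.

Lemma Pf_Ass S c a b : isfacet S c a b -> Ass I (Pf S).
Proof. by move=> HS; split; [exact: Pf_prime HS | exists (xS S)]. Qed.

Lemma lower S c a b m f w : isfacet S c a b -> symbolic_power I m f -> w \in msupp f ->
  (m <= degS S w)%N.
Proof.
move=> HS Hf Hw; have [g [Hg Hgf]] := Hf _ (Pf_Ass HS).
have [r Hr] := Ipow_psi HS Hgf.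
have Hg0 : (psi S g)`_0 != 0 by apply/eqP => H; apply: Hg; rewrite /Pf (Pf_psi _ HS).
move: Hr; rewrite psiM mulrC => /(cancelX Hg0) [r' Hr'].
rewrite leqNgt; apply/negP => Hlt.
have := coef_psi S f (degS S w) w; rewrite eqxx Hr' coefXnM Hlt mcoeff0 => /esym /eqP.
by rewrite mcoeff_eq0 Hw.
Qed.
End Ideal.

Section Upper.
Variable (K : fieldType) (n : nat).
Hypothesis hn : (4 <= n)%N.
Notation T := 'I_(n.+2).
Notation R := {mpoly K[n.+2]}.
Notation I := (SR_ideal_B K n).

Definition supp (u : 'X_{1..n.+2}) : {set T} := [set v | u v != 0%N].

Lemma I_mono w : ~~ B_face (supp w) -> I ('X_[w] : R).
Proof.
move=> Hw; set ms := (\sum_(i in supp w) U_(i))%MM.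
have Hle : (ms <= w)%MM.
  apply/mnm_lepP => j; rewrite /ms mnm_sumE (big_mkcond (mem (supp w))) /= (bigD1 j) //= big1.
    by rewrite addn0 mnm1E eqxx; case: ifP => //; rewrite inE; lia.
  by move=> i Hij; case: ifP => // _; rewrite mnm1E (negbTE Hij).
rewrite -(submK Hle) mpolyXD; apply: igM; apply: igS; exists (supp w); split => //.
by rewrite /ms -mprodXE.
Qed.

Lemma exists_face_mon (h : R) : ~ I h -> exists u, u \in msupp h /\ B_face (supp u).
Proof.
move=> Hh; case: (boolP (all (fun u => ~~ B_face (supp u)) (msupp h))) => [/allP Hall|].
  exfalso; apply: Hh; rewrite -(mulr1 h); apply: L2gen => w Hw; rewrite mulr1.
  by apply: I_mono; apply: Hall.
by move=> /allPn [u Hu /negbNE Hf]; exists u.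
Qed.

Lemma notP_X (P : R -> Prop) (h : R) S c a b u x :
  (forall g, P g <-> I (g * h)) -> isfacet S c a b -> u \in msupp h -> supp u \subset S ->
  x \in S -> ~ P ('X_x).
Proof.
move=> HP HS Hu Hsub Hx /HP /(I_psi HS) [r Hr].
have := congr1 (fun y : {poly _} => y`_0) Hr; rewrite /= psiM psiXU /hS Hx coefCM coefXM eqxx.
move/eqP; rewrite mulf_eq0 (negbTE (mpolyX_neq0 _ _)) /= => /eqP H0.
have Hd : degS S u = 0%N.
  rewrite /degS big1 // => v HvS; apply/eqP; apply: contraNT HvS => Hv.
  by apply: (subsetP Hsub); rewrite inE.
have := coef_psi S h 0 u; rewrite H0 Hd eqxx mcoeff0 => /esym /eqP.
by rewrite mcoeff_eq0 Hu.
Qed.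

Definition PG (k : nat) (x : R) := exists l : seq R, [/\ size l = k, (forall y, y \in l -> I y) & x = \prod_(y <- l) y].

Lemma PG0 : PG 0 1.
Proof. by exists [::]; rewrite big_nil. Qed.

Lemma PGM a b x y : PG a x -> PG b y -> PG (a + b) (x * y).
Proof.
move=> [l1 [<- H1 ->]] [l2 [<- H2 ->]]; exists (l1 ++ l2); split.
- by rewrite size_cat.
- by move=> z; rewrite mem_cat => /orP [] ?; [apply: H1|apply: H2].
- by rewrite big_cat.
Qed.

Lemma PG1 y : I y -> PG 1 y.
Proof. by move=> Hy; exists [:: y]; split => //; [move=> z; rewrite inE => /eqP -> | rewrite big_seq1]. Qed.

Lemma PGX y s : I y -> PG s (y ^+ s).
Proof.
move=> Hy; elim: s => [|s IH]; first by rewrite expr0; apply: PG0.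
by rewrite exprS -add1n; apply: PGM => //; apply: PG1.
Qed.

Lemma PGprod (J : eqType) (r : seq J) (F : J -> R) s : (forall j, j \in r -> I (F j)) ->
  PG (s * size r) (\prod_(j <- r) F j ^+ s).
Proof.
elim: r => [|j r IH] H; first by rewrite big_nil muln0; apply: PG0.
rewrite big_cons /= mulnS; apply: PGM; first by apply: PGX; apply: H; rewrite inE eqxx.
by apply: IH => i Hi; apply: H; rewrite inE Hi orbT.
Qed.

Lemma PG_pow k x : PG k x -> ideal_pow I k x.
Proof.
move=> [l [Hs Hl Hx]]; rewrite -(mul1r x); apply: igM; apply: igS.
by exists l.
Qed.

End Upper.

Section Upper2.
Variable (K : fieldType) (n : nat).
Hypothesis hn : (4 <= n)%N.
Notation T := 'I_(n.+2).
Notation R := {mpoly K[n.+2]}.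
Notation I := (SR_ideal_B K n).

Definition M : {set T} := ~: [set ord0; ord_max].
Definition fS (s : nat) : R := \prod_(v in M) 'X_v ^+ s.

Lemma inM (v : T) : (v \in M) = (0 < v <= n)%N.
Proof. rewrite !inE -!val_eqE /=; have := ltn_ord v; move=> H; apply/idP/idP; lia. Qed.

Lemma cardM : #|M| = n.
Proof.
have := cardsC [set (ord0 : T); ord_max]; rewrite cards2 card_ord -val_eqE /=.
by rewrite /M => H; apply/eqP; rewrite -(eqn_add2l 2) H.
Qed.

Lemma f_symb s : symbolic_power I (s * (n - 2)) (fS s).
Proof.
move=> P [[[HP0 HPD HPM] HP1 Hpr] [h HP]].
have Hh : ~ I h by move=> H; apply: HP1; apply/HP; rewrite mul1r.
have [u [Hu Hf]] := exists_face_mon hn Hh.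
have [S [c [a [b [HS Hsub]]]]] := face_facet Hf.
have HnX x : x \in S -> ~ P 'X_x := notP_X HP HS Hu Hsub.
have HS' := HS; case: HS' => Hc Hab HSe.
have [Hneab Ha Hb] := cyc_neq (leq_trans (isT : (2 <= 4)%N) hn) Hab.
have HaS : a \in S by rewrite HSe !inE eqxx ?orbT.
have HbS : b \in S by rewrite HSe !inE eqxx ?orbT.
have HnPM x y : ~ P x -> ~ P y -> ~ P (x * y) by move=> Hx Hy /Hpr [].
pose pr := fun v : T => if cyc_adj n v a then b else a.
have HprS v : pr v \in S by rewrite /pr; case: ifP.
set A := M :\: [set a; b].
exists (\prod_(v in A) 'X_(pr v) ^+ s); split.
  apply: (big_ind (fun x => ~ P x)) => // v _.
  elim: s => [|s' IH]; rewrite ?expr0 // exprS; apply: HnPM => //; exact: HnX.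
have HaM : a \in M by rewrite inM.
have HbM : b \in M by rewrite inM.
have Hba : b != a by rewrite -val_eqE /=; apply/eqP => H; apply: Hneab.
have Hf' : fS s = ('X_a ^+ s * 'X_b ^+ s) * \prod_(v in A) 'X_v ^+ s.
  rewrite /fS (bigD1 a) //= (bigD1 b) /=; last by rewrite HbM Hba.
  rewrite mulrA; congr (_ * _); apply: eq_bigl => v; rewrite !inE.
  by case: (v == a); case: (v == b); rewrite ?andbF ?andbT.
rewrite Hf' mulrCA -big_split /=; apply: igM.
rewrite -big_enum /=.
have -> : (n - 2 = size (enum A))%N.
  have Hsub2 : [set a; b] \subset M.
    by apply/subsetP => v; case/set2P => ->.
  rewrite -cardE /A cardsD cardM (setIidPr Hsub2) cards2.
  have -> : (a != b) by rewrite eq_sym.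
  by [].
rewrite (eq_bigr (fun v => ('X_v * 'X_(pr v)) ^+ s)); last by move=> v _; rewrite exprMn mulrC.
apply: PG_pow; apply: PGprod => v; rewrite mem_enum inE => /andP [Hv HvM].
rewrite !inE -!val_eqE /= in Hv.
have {}HvM : (0 < v <= n)%N by rewrite -inM.
have Hprv : (0 < pr v <= n)%N by rewrite /pr; case: ifP.
have Hne : v != pr v.
  rewrite -val_eqE /= /pr; case: ifP => _; rewrite -?val_eqE /=; lia.
have Hnadj : ~~ cyc_adj n v (pr v).
  rewrite /pr; case: ifP => H; last by rewrite H.
  apply/negP => H'.
  exact: (no_tri hn H Hab H').
apply: igS; exists [set v; pr v]; split; first exact: nonface2.
by rewrite big_setU1 ?big_set1 // inE.
Qed.
End Upper2.

Section Lower.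
Variable (K : fieldType) (n : nat).
Hypothesis hn : (4 <= n)%N.
Notation T := 'I_(n.+2).

Lemma mdeg_split S c a b (w : 'X_{1..n.+2}) : isfacet S c a b -> (degS S w + w c + w a + w b)%N = mdeg w.
Proof.
case=> Hc Hab HS; have [Hne Ha Hb] := cyc_neq (leq_trans (isT : (2 <= 4)%N) hn) Hab.
rewrite mdegE (bigID (mem S)) /=.
move: Hc; rewrite -!val_eqE /= => Hc.
have Hc1 : c \notin [set a; b] by rewrite !inE -!val_eqE /=; lia.
have Ha1 : a \notin [set b] by rewrite !inE -!val_eqE /=; lia.
have -> : (\sum_(i in S) w i = w c + w a + w b)%N.
  rewrite HS -setUA big_setU1 //= big_setU1 //= big_set1; lia.
have -> : (\sum_(i < n.+2 | i \notin S) w i = degS S w)%N by [].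
lia.
Qed.
End Lower.

Section Lower2.
Variable (K : fieldType) (n : nat).
Hypothesis hn : (4 <= n)%N.
Notation T := 'I_(n.+2).
Notation R := {mpoly K[n.+2]}.
Notation I := (SR_ideal_B K n).

Lemma rot_sum (W : nat -> nat) : (\sum_(i < n) W ((i.+1 %% n).+1) = \sum_(i < n) W i.+1)%N.
Proof.
case: n hn => [|n'] // Hn.
rewrite big_ord_recr big_ord_recl /= modnn addnC; congr (_ + _).
apply: eq_bigr => i _ /=; rewrite modn_small //; have := ltn_ord i; lia.
Qed.

Lemma mdeg_ends (w : 'X_{1..n.+2}) :
  mdeg w = (w ord0 + \sum_(i < n) w (inord i.+1) + w ord_max)%N.
Proof.
rewrite mdegE big_ord_recl big_ord_recr /= addnA; congr (_ + _ + _)%N.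
  apply: eq_bigr => i _; congr (w _); apply: val_inj => /=.
  rewrite /bump leq0n inordK //; have := ltn_ord i; lia.
by congr (w _); apply: val_inj.
Qed.

Lemma low_bound s f w : symbolic_power I (s * (n - 2)) f -> w \in msupp f ->
  (s * n <= mdeg w)%N.
Proof.
move=> Hf Hw.
pose W j := w (inord j).
have Hi (i : 'I_n) (c : T) : (c == ord0) || (c == ord_max) ->
    (s * (n - 2) + w c + W i.+1 + W (i.+1 %% n).+1 <= mdeg w)%N.
  move=> Hc.
  have HS : isfacet [set c; inord i.+1; inord (i.+1 %% n).+1] c (inord i.+1) (inord (i.+1 %% n).+1).
    split => //; apply/cyc_adjP.
    have Hi' := ltn_ord i; have Hn0 : (0 < n)%N by lia.
    have Hm := ltn_pmod i.+1 Hn0.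
    have E1 : nat_of_ord (inord i.+1 : T) = i.+1 by rewrite inordK //; lia.
    have E2 : nat_of_ord (inord (i.+1 %% n).+1 : T) = (i.+1 %% n).+1 by rewrite inordK //; lia.
    rewrite E1 E2; case: (ltnP i.+1 n) => H.
      by rewrite modn_small //; split; lia.
    have E : i.+1 = n by lia.
    by rewrite E modnn; split; lia.
  have := lower hn HS Hf Hw; have := mdeg_split hn w HS; rewrite /W; lia.
have Hsum (c : T) : (c == ord0) || (c == ord_max) ->
    (n * (s * (n - 2)) + n * w c + 2 * \sum_(i < n) W i.+1 <= n * mdeg w)%N.
  move=> Hc.
  have : (\sum_(i < n) (s * (n - 2) + w c + W i.+1 + W (i.+1 %% n).+1) <= \sum_(i < n) mdeg w)%N.
    by apply: leq_sum => i _; apply: Hi.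
  rewrite !big_split /= !sum_nat_const card_ord rot_sum.
  by rewrite mul2n -addnn addnA.
have H0 := Hsum ord0 ltac:(by rewrite eqxx); have H1 := Hsum ord_max ltac:(by rewrite eqxx orbT).
move: H0 H1; rewrite mdeg_ends /W.
set X0 := w ord0; set XN := w ord_max; set Sm := (\sum_(i < n) w (inord i.+1))%N.
move=> H0 H1.
have H2 : (2 * n * (s * (n - 2)) + 4 * Sm <= n * (X0 + XN) + 2 * n * Sm)%N by nia.
have H3 : (2 * n * (s * (n - 2)) <= (2 * n - 4) * (X0 + Sm + XN))%N by nia.
have H4 : (2 * n * (s * (n - 2)) = (2 * n - 4) * (s * n))%N.
  have -> : (2 * n - 4 = 2 * (n - 2))%N by lia.
  set q := (n - 2)%N; ring.
rewrite H4 in H3; rewrite -(leq_pmul2l (_ : 0 < 2 * n - 4)%N) //; lia.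
Qed.
End Lower2.

Unset Implicit Arguments.
Local Close Scope ring_scope.

Theorem proposition3p11 (K : fieldType) (k s : nat) (hk : (3 <= k)%N) (hs : (0 < s)%N) :
  alpha_eq (symbolic_power (SR_ideal_B K (2 * k - 1)) (s * (2 * k - 3)))
           (s * (2 * k - 1)).
Proof.
have hn : (4 <= 2 * k - 1)%N by lia.
rewrite (_ : (2 * k - 3 = (2 * k - 1) - 2)%N); last by lia.
move: (2 * k - 1)%N hn => n hn.
split.
  exists (fS K n s); split.
  - exact: f_symb.
  - by apply/prodf_neq0 => v _; rewrite expf_neq0 // mpolyX_neq0.
  - rewrite /fS mprodXnE /is_homog msuppX /= andbT mdeg_sum.
    rewrite (eq_bigr (fun _ => s)); last by move=> v _; rewrite mdegMn mdeg1 mul1n.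
    by rewrite sum_nat_const cardM mulnC.
move=> t f Hf Hf0 Hh.
case E: (msupp f) => [|w r].
  by move: Hf0; rewrite (mpolyE f) E big_nil eqxx.
have Hw : w \in msupp f by rewrite E mem_head.
have Ht : mdeg w = t by move/allP: Hh => /(_ w Hw) /eqP.
by rewrite -Ht; apply: (low_bound hn Hf Hw).
Qed.
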